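(* Let $R$ be a compact Hausdorff unitary topological ring satisfying the first countability axiom, and let $f:M\to N$ be a continuous homomorphism of complete totally disconnected $R$-modules. Then $f$ is strict if and only if $f(M)$ is closed in $N$.
   Context: A complete totally disconnected (t.d.) $R$-module is a Hausdorff, complete topological left $R$-module $M$ which has a basis of neighbourhoods of $0$ consisting of open submodules and which satisfies the second countability axiom. A continuous $R$-linear homomorphism $f:M\to N$ is called strict if the induced bijection $M/\ker(f)\to f(M)$ is a homeomorphism, where $M/\ker f$ carries the quotient topology and $f(M)$ the subspace topology of $N$. *)

(* Defs.v *)
From HB Require Import structures.
From mathcomp Require Import all_boot all_order all_algebra generic_quotient.
From mathcomp Require Import all_classical reals topology.
Set Implicit Arguments. Unset Strict Implicit. Unset Printing Implicit Defensive.
Import GRing.Theory.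
Local Open Scope classical_set_scope.
Local Open Scope ring_scope.

HB.structure Definition TopNmodule := {M of Topological M & GRing.Nmodule M}.
HB.structure Definition TopZmodule := {M of Topological M & GRing.Zmodule M}.

(* A (unitary) ring carrying a topology; the axioms of a topological ring
   are imposed separately by [topological_ring]. *)
HB.structure Definition TopNzRing := {R of Topological R & GRing.NzRing R}.
Notation topNzRingType := TopNzRing.type.

(* A left (unital) R-module carrying a topology; the axioms of a
   topological module are imposed separately by [topological_module]. *)
HB.structure Definition TopLmodule (R : nzRingType) :=
  {M of Topological M & GRing.Lmodule R M}.
Notation topLmodType R := (TopLmodule.type R).

Definition topological_ring (R : topNzRingType) : Prop :=
  [/\ continuous (fun p : R * R => p.1 + p.2),
      continuous (fun x : R => - x)
    & continuous (fun p : R * R => p.1 * p.2)].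

Definition first_countable (T : topologicalType) : Prop :=
  forall x : T, exists B : nat -> set T,
    (forall n, nbhs x (B n)) /\ (forall U, nbhs x U -> exists n, B n `<=` U).

Section Modules.
Variable R : topNzRingType.

Definition topological_module (M : topLmodType R) : Prop :=
  [/\ continuous (fun p : M * M => p.1 + p.2),
      continuous (fun x : M => - x)
    & continuous (fun p : R * M => p.1 *: p.2)].

Definition submodule (M : topLmodType R) (V : set M) : Prop :=
  [/\ V 0, (forall x y, V x -> V y -> V (x + y))
    & (forall (r : R) x, V x -> V (r *: x))].

(* Cauchy filters for the (translation-invariant) uniformity of the
   topological abelian group M *)
Definition cauchy_filter (M : topLmodType R) (F : set_system M) : Prop :=
  forall U, nbhs (0 : M) U ->
    exists2 A, F A & (forall x y, A x -> A y -> U (x - y)).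

Definition complete_module (M : topLmodType R) : Prop :=
  forall F : set_system M, ProperFilter F -> cauchy_filter F ->
    exists x : M, F --> x.

Definition complete_td_module (M : topLmodType R) : Prop :=
  [/\ topological_module M,
      hausdorff_space M,
      complete_module M,
      (forall U, nbhs (0 : M) U ->
         exists V : set M, [/\ open V, submodule V & V `<=` U])
    & @second_countable M].

Section Strict.
Local Open Scope quotient_scope.
Variables (M N : topLmodType R) (f : M -> N).

Definition ker_rel : rel M := fun x y => f x == f y.

Lemma ker_rel_refl : reflexive ker_rel.
Proof. by move=> x; rewrite /ker_rel eqxx. Qed.
Lemma ker_rel_sym : symmetric ker_rel.
Proof. by move=> x y; rewrite /ker_rel eq_sym. Qed.
Lemma ker_rel_trans : transitive ker_rel.
Proof. by move=> y x z; rewrite /ker_rel => /eqP -> /eqP ->. Qed.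

Canonical ker_equiv := EquivRel ker_rel ker_rel_refl ker_rel_sym ker_rel_trans.

Definition ker_quot := quotient_topology {eq_quot ker_equiv}.

(* the induced bijection M / ker f -> f(M), where f(M) (a set_type)
   carries the subspace topology *)
Definition induced_map (q : ker_quot) : set_type (range f) :=
  SigSub (mem_set (ex_intro2 _ _ (repr q) I erefl : range f (f (repr q)))).

Definition strict : Prop :=
  exists h : set_type (range f) -> ker_quot,
    [/\ cancel induced_map h, cancel h induced_map,
        continuous induced_map & continuous h].
End Strict.
End Modules.

(* Main.v *)
Require Import Defs.
From HB Require Import structures.
From mathcomp Require Import all_boot all_order all_algebra generic_quotient.
From mathcomp Require Import all_classical reals topology.
Set Implicit Arguments. Unset Strict Implicit. Unset Printing Implicit Defensive.
Import GRing.Theory.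
Local Open Scope classical_set_scope.
Local Open Scope ring_scope.

Lemma subsub (V : zmodType) (a b c d : V) : (a - b) - (c - d) = (a - c) - (b - d).
Proof. by rewrite !opprB addrACA [RHS]addrACA [- c - b]addrC. Qed.

Section Grp.
Variables (R : topNzRingType) (M : topLmodType R).
Hypothesis hM : topological_module M.

Definition subgrp (V : set M) := V 0 /\ (forall x y, V x -> V y -> V (x - y)).

Lemma cont_addr (c : M) : continuous (fun x : M => x + c).
Proof.
case: hM => hadd _ _ x.
have -> : (fun x : M => x + c) = (fun p : M * M => p.1 + p.2) \o (fun x => (x, c)) by [].
apply: continuous_comp; last exact: hadd.
apply: cvg_pair; [exact: cvg_id | exact: cvg_cst].
Qed.

Lemma open_coset (V : set M) (c : M) : open V -> open [set x | V (x - c)].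
Proof. by move=> oV; have := cont_addr (c := - c); move/continuousP; apply. Qed.

Lemma nbhs_coset (V : set M) (c : M) : open V -> V 0 -> nbhs c [set x | V (x - c)].
Proof. by move=> oV V0; apply: open_nbhs_nbhs; split; [exact: open_coset|rewrite /= subrr]. Qed.

Lemma subgrpN V x : subgrp V -> V x -> V (- x).
Proof. by case=> V0 Vs Vx; rewrite -sub0r; exact: Vs. Qed.

Lemma subgrpD V x y : subgrp V -> V x -> V y -> V (x + y).
Proof. by move=> sV Vx Vy; rewrite -[y]opprK; apply: sV.2 => //; exact: subgrpN. Qed.

Lemma lim_coset (u : nat -> M) (l c : M) (V : set M) : open V -> subgrp V ->
  u @ \oo --> l -> (\forall n \near \oo, V (u n - c)) -> V (l - c).
Proof.
move=> oV sV ul ev.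
have Nl : nbhs l [set x | V (x - l)] := nbhs_coset l oV sV.1.
have ev2 : \forall n \near \oo, V (u n - l) := ul _ Nl.
near \oo => n.
have h1 : V (u n - c) by near: n; exact: ev.
have h2 : V (u n - l) by near: n; exact: ev2.
have := sV.2 _ _ h1 h2.
by rewrite opprB addrC addrA subrK.
Unshelve. all: by end_near.
Qed.


Definition isbase (V : nat -> set M) :=
  [/\ (forall n, open (V n) /\ subgrp (V n)), (forall n, V n.+1 `<=` V n)
    & (forall U, nbhs 0 U -> exists n, V n `<=` U)].

Lemma submodule_subgrp V : submodule V -> subgrp V.
Proof.
case=> V0 VD VZ; split => // x y Vx Vy.
by rewrite -scaleN1r; apply: VD => //; exact: VZ.
Qed.

Lemma countable_enum (T : Type) (B : set (set T)) : countable B ->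
  exists g : nat -> set T, B `<=` range g.
Proof.
move=> /pcard_surjP [g gs]; exists g => b /gs [n _ <-]; by exists n.
Qed.

Hypothesis hMtd : complete_td_module M.

Lemma base_exists : exists V, isbase V.
Proof.
case: hMtd => _ _ _ hsub [B cB hB].
have [g gB] := countable_enum cB.
have : forall k, exists V : set M, [/\ open V, subgrp V &
     ((B (g k) /\ g k 0) -> V `<=` g k)].
  move=> k; case: (pselect (B (g k) /\ g k 0)) => [[Bg g0]|nBg].
    have ng : nbhs (0 : M) (g k).
      by apply: open_nbhs_nbhs; split => //; exact: hB.1.
    have [V [oV sV VU]] := hsub _ ng.
    by exists V; split => //; exact: submodule_subgrp.
  exists setT; split; [exact: openT | by split | by move=> /nBg].
move=> /choice [U hU].
pose fix W n := if n is n'.+1 then W n' `&` U n else U 0%N.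
exists W; split.
- elim=> [|n [oW sW]] /=; first by have [oU sU _] := hU 0%N.
  have [oU sU _] := hU n.+1; split; first exact: openI.
  split; first by split; [exact: sW.1 | exact: sU.1].
  by move=> x y [Wx Ux] [Wy Uy]; split; [exact: sW.2 | exact: sU.2].
- by move=> n x [].
- move=> A nA.
  have [b [Bb b0] bA] := hB.2 0 A nA.
  have [k _ gk] := gB _ Bb.
  exists k; move=> x Wx; apply: bA; rewrite -gk.
  have [_ _ Ug] := hU k; apply: Ug; first by rewrite gk.
  by case: k {gk} Wx => [|k] //= [].
Qed.

Lemma base_mono V n m : isbase V -> (n <= m)%N -> V m `<=` V n.
Proof.
case=> _ dV _; elim: m => [|m IH]; first by rewrite leqn0 => /eqP ->.
rewrite leq_eqVlt => /orP [/eqP -> //|]; rewrite ltnS => /IH h x /dV; exact: h.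
Qed.

Lemma base_sub V n : isbase V -> subgrp (V n).
Proof. by case=> /(_ n) []. Qed.
Lemma base_open V n : isbase V -> open (V n).
Proof. by case=> /(_ n) []. Qed.

Lemma seq_tail V (x : nat -> M) : isbase V -> (forall n, V n (x n.+1 - x n)) ->
  forall n m, (n <= m)%N -> V n (x m - x n).
Proof.
move=> bV hx n; elim=> [|m IH].
  by rewrite leqn0 => /eqP ->; rewrite subrr; exact: (base_sub _ bV).1.
rewrite leq_eqVlt => /orP [/eqP -> |]; first by rewrite subrr; exact: (base_sub _ bV).1.
rewrite ltnS => nm.
have sV : subgrp (V n) by case: bV => /(_ n) [].
have -> : x m.+1 - x n = (x m.+1 - x m) + (x m - x n) by rewrite addrA subrK.
apply: subgrpD => //; last exact: IH.
by apply: (base_mono bV nm); exact: hx.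
Qed.

Lemma cvg_seq V (x : nat -> M) : isbase V -> (forall n, V n (x n.+1 - x n)) ->
  exists l : M, x @ \oo --> l.
Proof.
move=> bV hx; case: hMtd => _ _ hc _ _; apply: (hc (x @ \oo)).
move=> U nU; have [_ _ b] := bV; have [n VU] := b U nU.
exists (x @` [set m | (n <= m)%N]).
  by apply: filterS (nbhs_infty_ge n) => m nm; exists m.
have sV : subgrp (V n) by case: bV => /(_ n) [].
move=> _ _ [m nm <-] [k nk <-]; apply: VU.
have -> : x m - x k = (x m - x n) - (x k - x n) by rewrite opprB addrA subrK.
by apply: sV.2; exact: (seq_tail bV hx).
Qed.

Lemma lim_tail V (x : nat -> M) l : isbase V -> (forall n, V n (x n.+1 - x n)) ->
  x @ \oo --> l -> forall n, V n (l - x n).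
Proof.
move=> bV hx xl n; have [oV sV] : open (V n) /\ subgrp (V n) by case: bV.
apply: (lim_coset oV sV xl).
by apply: filterS (nbhs_infty_ge n) => m nm; exact: (seq_tail bV hx).
Qed.

Lemma coset_enum (V : set M) : open V -> subgrp V ->
  exists xs : nat -> M, forall x, exists i, V (x - xs i).
Proof.
move=> oV sV; case: hMtd => _ _ _ _ [B cB hB].
have [g gB] := countable_enum cB.
have : forall k, exists p : M, (exists q, g k q) -> g k p.
  move=> k; case: (pselect (exists q, g k q)) => [[q gq]|]; first by exists q.
  by move=> ng; exists 0 => /ng.
move=> /choice [p hp]; exists p => x.
have nx := nbhs_coset x oV sV.1.
have [b [Bb bx] bA] := hB.2 x _ nx.
have [k _ gk] := gB _ Bb.
exists k; have gkp : g k (p k) by apply: hp; exists x; rewrite gk.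
have := bA (p k); rewrite -gk => /(_ gkp) /= Vpx.
by have := subgrpN sV Vpx; rewrite opprB.
Qed.

Lemma seq_tail_gen V (m : nat -> nat) (x : nat -> M) : isbase V ->
  (forall n, (m n <= m n.+1)%N) -> (forall n, V (m n) (x n.+1 - x n)) ->
  forall n j, (n <= j)%N -> V (m n) (x j - x n).
Proof.
move=> bV mm hx n; elim=> [|j IH].
  by rewrite leqn0 => /eqP ->; rewrite subrr; exact: (base_sub _ bV).1.
rewrite leq_eqVlt => /orP [/eqP -> |]; first by rewrite subrr; exact: (base_sub _ bV).1.
rewrite ltnS => nj.
have -> : x j.+1 - x n = (x j.+1 - x j) + (x j - x n) by rewrite addrA subrK.
apply: subgrpD; [exact: base_sub | | exact: IH].
apply: (base_mono (n := m n) (m := m j) bV); last exact: hx.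
elim: j nj {IH} => [|j IHj]; first by rewrite leqn0 => /eqP ->.
rewrite leq_eqVlt => /orP [/eqP -> //|]; rewrite ltnS => /IHj h.
exact: leq_trans h (mm j).
Qed.

Lemma nbhs_base_coset V (U : set M) (x : M) : isbase V -> nbhs x U ->
  exists n, forall z, V n (z - x) -> U z.
Proof.
move=> bV nU.
have c0 := cont_addr (c := x) (x := 0).
have nU0 : nbhs (0 : M) [set z | U (z + x)] by apply: c0; rewrite add0r.
have [_ _ b] := bV; have [k Vk] := b _ nU0.
by exists k => z /Vk /=; rewrite subrK.
Qed.

Lemma cvg_base V (u : nat -> M) (l : M) : isbase V ->
  (forall k, \forall j \near \oo, V k (u j - l)) -> u @ \oo --> l.
Proof.
move=> bV h U nU.
have c0 := cont_addr (c := l) (x := 0).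
have nU0 : nbhs (0 : M) [set z | U (z + l)].
  by apply: c0; rewrite add0r.
have [_ _ b] := bV; have [k Vk] := b _ nU0.
apply: filterS (h k) => j /Vk /=; by rewrite subrK.
Qed.

End Grp.

Lemma mono_index (m0 : nat -> nat) : exists c : nat -> nat,
  [/\ (forall j, (m0 j <= c j)%N), (forall j, (c j < c j.+1)%N) & (forall j, (j <= c j)%N)].
Proof.
pose fix c j := if j is j'.+1 then maxn (c j').+1 (m0 j) else m0 0%N.
have h1 : forall j, (m0 j <= c j)%N by case=> //= j; rewrite leq_max leqnn orbT.
have h2 : forall j, (c j < c j.+1)%N by move=> j /=; rewrite leq_max leqnn.
exists c; split => //; elim=> // j IH; exact: leq_ltn_trans IH (h2 j).
Qed.

Lemma mono_le (c : nat -> nat) : (forall j, (c j < c j.+1)%N) ->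
  forall i j, (i <= j)%N -> (c i <= c j)%N.
Proof.
move=> h i; elim=> [|j IH]; first by rewrite leqn0 => /eqP ->.
rewrite leq_eqVlt => /orP [/eqP -> //|]; rewrite ltnS => /IH hij.
exact: leq_trans hij (ltnW (h j)).
Qed.

Section Main.
Variables (R : topNzRingType) (M N : topLmodType R) (f : {linear M -> N}).
Hypotheses (hM : topological_module M) (hN : topological_module N)
  (tdM : complete_td_module M) (tdN : complete_td_module N) (fc : continuous f).
Variables (VM : nat -> set M) (WN : nat -> set N).
Hypotheses (bVM : isbase VM) (bWN : isbase WN).

Definition propO := forall n, exists m, forall y, WN m y -> range f y ->
  exists x, VM n x /\ f x = y.

Lemma rangeB a b : range f a -> range f b -> range f (a - b).
Proof. by move=> [x _ <-] [y _ <-]; exists (x - y) => //; rewrite linearB. Qed.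

Lemma rangeD a b : range f a -> range f b -> range f (a + b).
Proof. by move=> [x _ <-] [y _ <-]; exists (x + y) => //; rewrite linearD. Qed.

Lemma propO_norm : propO -> exists c : nat -> nat,
  [/\ (forall j, (c j < c j.+1)%N), (forall j, (j <= c j)%N) &
    forall n y, WN (c n) y -> range f y -> exists x, VM n x /\ f x = y].
Proof.
move=> /choice [m0 hm0]; have [c [c1 c2 c3]] := mono_index m0.
exists c; split => // n y Wy Yy; apply: hm0 => //.
exact: (base_mono (n := m0 n) (m := c n) bWN).
Qed.

Lemma hausN : hausdorff_space N. Proof. by case: tdN. Qed.

Lemma partB : propO -> closed (range f).
Proof.
move=> /propO_norm [c [c1 c2 hc]] y cly.
have : forall j, exists z, range f z /\ WN (c j) (z - y).
  move=> j; have := cly _ (nbhs_coset hN y (base_open (c j) bWN) (base_sub (c j) bWN).1).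
  by case=> z [Yz Wz]; exists z.
move=> /choice [z hz].
have : forall j, exists v, VM j v /\ f v = z j.+1 - z j.
  move=> j; apply: hc; last by apply: rangeB; [exact: (hz _).1|exact: (hz _).1].
  have -> : z j.+1 - z j = (z j.+1 - y) - (z j - y) by rewrite opprB addrA subrK.
  apply: (base_sub _ bWN).2; last exact: (hz _).2.
  by apply: (base_mono (n := c j) (m := c j.+1) bWN); [exact: ltnW | exact: (hz _).2].
move=> /choice [v hv].
have [x0 _ fx0] := (hz 0%N).1.
pose x j := x0 + \sum_(i < j) v i.
have xS j : x j.+1 - x j = v j.
  by rewrite /x big_ord_recr /= addrA [_ + v j]addrC addrK.
have fx j : f (x j) = z j.
  elim: j => [|j IH]; first by rewrite /x big_ord0 addr0.
  have -> : x j.+1 = x j + v j by rewrite -xS addrC subrK.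
  by rewrite linearD IH (hv j).2 addrC subrK.
have [l xl] := cvg_seq tdM bVM (x := x) (fun j => eq_ind_r (VM j) (hv j).1 (xS j)).
have fl : (f \o x) @ \oo --> f l by apply: cvg_comp; [exact: xl | exact: fc].
have fy : (f \o x) @ \oo --> y.
  apply: (cvg_base hN bWN) => k; apply: filterS (nbhs_infty_ge k) => j kj /=.
  rewrite fx; apply: (base_mono (n := k) (m := c j) bWN); last exact: (hz _).2.
  exact: leq_trans kj (c2 j).
by exists l => //; apply: (cvg_unique hausN fl fy).
Qed.


Definition cl (V : set M) z := forall k, exists v, V v /\ WN k (f v - z).

Lemma cl_sub V a b : subgrp V -> cl V a -> cl V b -> cl V (b - a).
Proof.
move=> sV ca cb k; have [v1 [V1 W1]] := cb k; have [v2 [V2 W2]] := ca k.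
exists (v1 - v2); split; first exact: sV.2.
by rewrite linearB subsub; apply: (base_sub k bWN).2.
Qed.

Lemma ncl_ex V z : ~ cl V z -> exists k, forall v, V v -> ~ WN k (f v - z).
Proof.
move=> nc; case: (pselect (exists k, forall v, V v -> ~ WN k (f v - z))) => // H.
exfalso; apply: nc => k.
case: (pselect (exists v, V v /\ WN k (f v - z))) => // H2.
by exfalso; apply: H; exists k => v Vv Wk; apply: H2; exists v.
Qed.

Lemma baire (V : set M) : open V -> subgrp V -> closed (range f) ->
  exists m, forall y, WN m y -> range f y -> cl V y.
Proof.
move=> oV sV clY.
case: (pselect (exists m, forall y, WN m y -> range f y -> cl V y)) => // nC.
exfalso.
have neg : forall m, exists y, [/\ WN m y, range f y & ~ cl V y].
  move=> m; case: (pselect (exists y, [/\ WN m y, range f y & ~ cl V y])) => // H.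
  exfalso; apply: nC; exists m => y Wy Yy.
  case: (pselect (cl V y)) => // ncl; exfalso; apply: H; by exists y.
have trans : forall a m, range f a ->
    exists z, [/\ range f z, WN m (z - a) & ~ cl V z].
  move=> a m Ya.
  case: (pselect (exists z, [/\ range f z, WN m (z - a) & ~ cl V z])) => // H.
  exfalso; have [y [Wy Yy ncy]] := neg m; apply: ncy.
  have allcl : forall z, range f z -> WN m (z - a) -> cl V z.
    move=> z Yz Wz; case: (pselect (cl V z)) => // ncz.
    by exfalso; apply: H; exists z.
  have ca : cl V a by apply: allcl => //; rewrite subrr; exact: (base_sub m bWN).1.
  have cay : cl V (a + y) by apply: allcl; [exact: rangeD | rewrite [a + y]addrC addrK].
  by have := cl_sub sV ca cay; rewrite [a + y]addrC addrK.
have [xs hxs] := coset_enum hM tdM oV sV.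
have : forall (p : nat * (N * nat)), exists q : N * nat, range f p.2.1 ->
    [/\ range f q.1, WN p.2.2 (q.1 - p.2.1), (p.2.2 < q.2)%N &
      forall v, V v -> ~ WN q.2 (f (xs p.1 + v) - q.1)].
  move=> [i [y m]] /=; case: (pselect (range f y)) => Yy; last first.
    by exists (0, 0%N).
  have Yx : range f (f (xs i)) by exists (xs i).
  have [z [Yz Wz ncz]] := trans (y - f (xs i)) m (rangeB Yy Yx).
  have [k hk] := ncl_ex ncz.
  exists (z + f (xs i), maxn k m.+1) => _ /=; split.
  - exact: rangeD.
  - by have -> : z + f (xs i) - y = z - (y - f (xs i)) by rewrite opprB addrA.
  - by rewrite leq_max leqnn orbT.
  - move=> v Vv Wv; apply: (hk v Vv).
    apply: (base_mono (n := k) (m := maxn k m.+1) bWN (leq_maxl _ _)).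
    by move: Wv; rewrite linearD [z + _]addrC [f (xs i) + f v]addrC addrKA.
move=> /choice [st hst].
pose fix sq i := if i is i'.+1 then st (i', sq i') else (0 : N, 0%N).
have Ysq : forall i, range f (sq i).1.
  elim=> [|i IH] /=; first by exists 0 => //; rewrite linear0.
  by have [] := hst (i, sq i) IH.
have spec i := hst (i, sq i) (Ysq i).
have mS : forall i, ((sq i).2 < (sq i.+1).2)%N by move=> i; have [] := spec i.
have mge : forall i, (i <= (sq i).2)%N.
  elim=> // i IH; exact: leq_ltn_trans IH (mS i).
have stepW : forall i, WN (sq i).2 ((sq i.+1).1 - (sq i).1) by move=> i; have [] := spec i.
have [ys yl] := cvg_seq tdN bWN (x := fun i => (sq i).1)
  (fun i => base_mono (n := i) (m := (sq i).2) bWN (mge i) (stepW i)).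
have Yys : range f ys.
  apply: clY => B nB; have ev : \forall j \near \oo, B (sq j).1 := yl B nB.
  have [j Bj] := filter_ex ev.
  by exists (sq j).1.
have [xstar _ fxs] := Yys.
have [i hi] := hxs xstar.
have tail : WN (sq i.+1).2 (ys - (sq i.+1).1).
  apply: (lim_coset hN (base_open _ bWN) (base_sub _ bWN) yl).
  apply: filterS (nbhs_infty_ge i.+1) => j ij.
  apply: (seq_tail_gen (m := fun i => (sq i).2) (x := fun i => (sq i).1) bWN) => //.
  by move=> k; exact: ltnW.
have [_ _ _ dis] := spec i.
apply: (dis (xstar - xs i) hi).
have -> : xs (i, sq i).1 + (xstar - xs i) = xstar by rewrite /= addrC subrK.
by rewrite fxs; exact: tail.
Qed.

Lemma refine : (forall n, exists m, forall y, WN m y -> range f y -> cl (VM n) y) ->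
  propO.
Proof.
move=> /choice [m0 hm0]; have [c [c1 c2 c3]] := mono_index m0.
have hc : forall n y, WN (c n) y -> range f y -> cl (VM n) y.
  move=> n y Wy; apply: hm0.
  exact: (base_mono (n := m0 n) (m := c n) bWN).
move=> n; exists (c n.+1) => y Wy Yy.
have : forall p : nat * N, exists v, (WN (c (n.+1 + p.1)%N) p.2 /\ range f p.2) ->
    VM (n.+1 + p.1)%N v /\ WN (c ((n.+1 + p.1).+1)%N) (f v - p.2).
  move=> [j r] /=; case: (pselect (WN (c (n.+1 + j)%N) r /\ range f r)); last first.
    by move=> H; exists 0.
  move=> [Wr Yr]; have [v hv] := hc _ _ Wr Yr (c ((n.+1 + j).+1)%N).
  by exists v.
move=> /choice [g hg].
pose fix r j := if j is j'.+1 then r j' - f (g (j', r j')) else y.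
have inv : forall j, WN (c (n.+1 + j)%N) (r j) /\ range f (r j).
  elim=> [|j [Wj Yj]] /=; first by rewrite addn0.
  have [Vg Wg] := hg (j, r j) (conj Wj Yj).
  split; last by apply: rangeB => //; exists (g (j, r j)).
  rewrite addnS; have := subgrpN (base_sub _ bWN) Wg; by rewrite opprB.
pose u j := g (j, r j).
have hu : forall j, VM (n.+1 + j)%N (u j) by move=> j; exact: (hg (j, r j) (inv j)).1.
pose s j := \sum_(i < j) u i.
have sS j : s j.+1 - s j = u j by rewrite /s big_ord_recr /= addrC addrK.
have fs : forall j, f (s j) + r j = y.
  elim=> [|j IH]; first by rewrite /s big_ord0 linear0 add0r.
  have -> : s j.+1 = s j + u j by rewrite -sS addrC subrK.
  by rewrite linearD /= addrACA subrr addr0.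
have sV : forall j, VM n (s j).
  elim=> [|j IH]; first by rewrite /s big_ord0; exact: (base_sub _ bVM).1.
  have -> : s j.+1 = s j + u j by rewrite -sS addrC subrK.
  apply: subgrpD; [exact: base_sub | exact: IH |].
  apply: (base_mono (n := n) (m := (n.+1 + j)%N) bVM); last exact: hu.
  by rewrite addSn ltnW // ltnS leq_addr.
have [l sl] := cvg_seq tdM bVM (x := s) (fun j =>
  eq_ind_r (VM j) (base_mono (n := j) (m := (n.+1 + j)%N) bVM (leq_addl _ _) (hu j)) (sS j)).
exists l; split.
  rewrite -[l]subr0; apply: (lim_coset hM (base_open _ bVM) (base_sub _ bVM) sl).
  by apply: nearW => j; rewrite subr0.
have fl : (f \o s) @ \oo --> f l by apply: cvg_comp; [exact: sl | exact: fc].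
have fy : (f \o s) @ \oo --> y.
  apply: (cvg_base hN bWN) => k; apply: filterS (nbhs_infty_ge k) => j kj /=.
  have -> : f (s j) - y = - r j by rewrite -(fs j) opprD addrA subrr add0r.
  apply: subgrpN; first exact: base_sub.
  apply: (base_mono (n := k) (m := c (n.+1 + j)%N) bWN); last exact: (inv j).1.
  exact: leq_trans kj (leq_trans (leq_addl _ _) (c3 _)).
exact: (cvg_unique hausN fl fy).
Qed.

Lemma partC : closed (range f) -> propO.
Proof.
move=> clY; apply: refine => n.
exact: baire (base_open _ bVM) (base_sub _ bVM) clY.
Qed.


Local Open Scope quotient_scope.
Definition pi : M -> ker_quot f := \pi_(ker_quot f).

Lemma qopen (A : set (ker_quot f)) : open (pi @^-1` A) -> open A.
Proof. by []. Qed.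
Lemma sopen (A : set (set_type (range f))) :
  (exists2 B : set N, open B & set_val @^-1` B = A) -> open A.
Proof. by []. Qed.
Lemma sopen2 (A : set (set_type (range f))) : open A ->
  (exists2 B : set N, open B & set_val @^-1` B = A).
Proof. by []. Qed.
Lemma valind q : set_val (@induced_map R M N f q) = f (repr q).
Proof. by []. Qed.
Lemma pi_eq x y : f x = f y -> pi x = pi y.
Proof. move=> e; apply/eqquotP; rewrite /= /ker_rel; exact/eqP. Qed.
Lemma frepr x : f (repr (pi x)) = f x.
Proof.
have : pi (repr (pi x)) = pi x by rewrite /pi reprK.
by move/eqquotP; rewrite /= /ker_rel => /eqP.
Qed.
Lemma piK q : pi (repr q) = q.
Proof. by rewrite /pi reprK. Qed.

Lemma strict_propO : strict f -> propO.
Proof.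
move=> [h [c1 c2 ci ch]] n.
pose Q := [set q : ker_quot f | exists v, VM n v /\ f v = f (repr q)].
have oQ : open Q.
  apply: qopen; rewrite openE => x [v [Vv fv]].
  apply: filterS (nbhs_coset hM x (base_open n bVM) (base_sub n bVM).1) => z /= Vz.
  exists (v + (z - x)); split; first by apply: subgrpD => //; exact: base_sub.
  by rewrite frepr linearD linearB fv frepr addrC subrK.
have [B oB eB] := sopen2 ((continuousP _).1 ch Q oQ).
have B0 : B 0.
  have : (h @^-1` Q) (@induced_map R M N f (pi 0)).
    by rewrite /= c1; exists 0; split; [exact: (base_sub n bVM).1 | rewrite frepr].
  by rewrite -eB /= valind frepr linear0.
have [_ _ b] := bWN; have [m Wm] := b B (open_nbhs_nbhs (conj oB B0)).
exists m => y /Wm By [x _ fxy].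
have : (h @^-1` Q) (@induced_map R M N f (pi x)).
  by rewrite -eB /= valind frepr fxy.
by rewrite /= c1 => -[v [Vv fv]]; exists v; rewrite fv frepr.
Qed.

Lemma propO_strict : propO -> strict f.
Proof.
move=> /choice [mo hmo].
have : forall s : set_type (range f), exists x, f x = set_val s.
  move=> s; have : range f (set_val s) by exact: set_valP.
  by case=> x _ e; exists x.
move=> /choice [pre hpre].
exists (fun s => pi (pre s)); split.
- move=> q; rewrite -[RHS]piK; apply: pi_eq; by rewrite hpre valind.
- move=> s; apply: val_inj => /=.
  by rewrite -[val s]/(set_val s) -hpre; exact: frepr.
- apply/quotient_continuous/continuousP => A /sopen2 [B oB <-].
  have -> : (@induced_map R M N f \o \pi_(ker_quot f)) @^-1` (set_val @^-1` B) = f @^-1` B.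
    by apply/seteqP; split => x /=; rewrite valind -/(pi x) frepr.
  exact: (continuousP _).1 fc B oB.
- apply/continuousP => A /= oA; apply: sopen.
  pose B := [set y : N | exists x n, [/\ A (pi x), (forall z, VM n (z - x) -> A (pi z))
     & WN (mo n) (y - f x)]].
  exists B.
    rewrite openE => y [x [n [Ax hx Wy]]].
    apply: filterS (nbhs_coset hN y (base_open (mo n) bWN) (base_sub (mo n) bWN).1).
    move=> y' /= Wy'; exists x, n; split => //.
    have -> : y' - f x = (y' - y) + (y - f x) by rewrite addrA subrK.
    by apply: subgrpD => //; exact: base_sub.
  apply/seteqP; split => s /=.
    move=> [x [n [Ax hx Wy]]].
    have Ysv : range f (set_val s).
      by exact: set_valP.
    have [v [Vv fv]] := hmo n _ Wy (rangeB Ysv (ex_intro2 _ _ x I erefl)).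
    have -> : pi (pre s) = pi (x + v) by apply: pi_eq; rewrite linearD fv hpre addrC subrK.
    by apply: hx; rewrite [x + v]addrC addrK.
  move=> As; exists (pre s).
  have nA : nbhs (pre s) (pi @^-1` A) by apply: open_nbhs_nbhs; split.
  have [n hn] := nbhs_base_coset hM bVM nA.
  exists n; split => //; by rewrite hpre subrr; exact: (base_sub _ bWN).1.
Qed.

End Main.

Unset Implicit Arguments.

Theorem proposition1p1 (R : topNzRingType) (M N : topLmodType R)
  (f : {linear M -> N}) :
  topological_ring R -> compact [set: R] -> hausdorff_space R ->
  first_countable R ->
  complete_td_module M -> complete_td_module N -> continuous f ->
  strict f <-> closed (range f).
Proof.
move=> _ _ _ _ tdM tdN fc.
have hM : topological_module M by case: tdM.
have hN : topological_module N by case: tdN.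
have [VM bVM] := base_exists tdM.
have [WN bWN] := base_exists tdN.
split.
  by move=> st; apply: (partB hN tdM tdN fc bVM bWN); exact: (strict_propO hM bVM bWN st).
move=> cl; apply: (propO_strict hM hN fc bVM bWN).
exact: (partC hM hN tdM tdN fc bVM bWN cl).
Qed.
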